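(* Let $G$ be a quiver without multiple connections with $n \geq 1$ vertices, let $\lambda_1 \leq \cdots \leq \lambda_n$ be the eigenvalues of its Kirchhoff matrix $K$ (with multiplicity), and let $d_1 \leq \cdots \leq d_n$ be its vertex degrees in increasing order. Then $\lambda_k \geq d_k - (n-k)$ for all $1 \leq k \leq n$.
   Context: A quiver $G=(V,E)$ consists of a finite vertex set $V=\{1,\dots,n\}$ and a finite list (multiset) $E$ of pairs $(v,w)\in V\times V$; repeated edges and self-loops $(v,v)$ are allowed, and orientation of edges is irrelevant. ''Without multiple connections'' means that for any two distinct vertices $i\neq j$ there is at most one entry of $E$ equal to $(i,j)$ or $(j,i)$; any number of loops at a vertex is still allowed. The adjacency matrix $A$ is the symmetric $n\times n$ matrix with zero diagonal whose entry $A_{ij}$ ($i\neq j$) is the number of entries of $E$ equal to $(i,j)$ or $(j,i)$. The degree $d(i)$ of vertex $i$ is the number of entries $(v,w)$ of $E$ (counted with multiplicity) with $v=i$ or $w=i$; a loop at $i$ contributes $1$. $B$ is the diagonal degree matrix and the Kirchhoff matrix is $K=B-A$. *)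

(* Defs.v *)
From HB Require Import structures.
From mathcomp Require Import all_boot all_order all_algebra.
From mathcomp Require Import reals.
Set Implicit Arguments. Unset Strict Implicit. Unset Printing Implicit Defensive.
Import Order.TTheory GRing.Theory Num.Theory.
Local Open Scope ring_scope.

(* A quiver on vertex set 'I_n is a list (multiset) of pairs of vertices.
   Loops (v,v) and repeated entries are allowed; orientation is irrelevant. *)
Definition quiver (n : nat) := seq ('I_n * 'I_n).

Definition nconn (n : nat) (E : quiver n) (i j : 'I_n) : nat :=
  count (fun e => (e == (i, j)) || (e == (j, i))) E.

Definition no_multiple_connections (n : nat) (E : quiver n) : Prop :=
  forall i j : 'I_n, i != j -> (nconn E i j <= 1)%N.

(* degree: number of entries (v,w) with v = i or w = i; a loop counts once *)
Definition degree (n : nat) (E : quiver n) (i : 'I_n) : nat :=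
  count (fun e => (e.1 == i) || (e.2 == i)) E.

Definition adjacency_mx (R : nzRingType) (n : nat) (E : quiver n) : 'M[R]_n :=
  \matrix_(i, j) (if i == j then 0 else (nconn E i j)%:R).

Definition degree_mx (R : nzRingType) (n : nat) (E : quiver n) : 'M[R]_n :=
  \matrix_(i, j) (if i == j then (degree E i)%:R else 0).

Definition kirchhoff_mx (R : nzRingType) (n : nat) (E : quiver n) : 'M[R]_n :=
  degree_mx R E - adjacency_mx R E.

(* degrees sorted increasingly: d_1 <= ... <= d_n (0-indexed) *)
Definition sorted_degrees (n : nat) (E : quiver n) : seq nat :=
  sort leq [seq degree E i | i <- enum 'I_n].

Definition sorted_eigenvalues (R : realType) (n : nat) (M : 'M[R]_n) (s : seq R) : Prop :=
  sorted <=%R s /\ char_poly M = \prod_(x <- s) ('X - x%:P).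

(* Main.v *)
Require Import Defs.
From HB Require Import structures.
From mathcomp Require Import all_boot all_order all_algebra.
From mathcomp Require Import reals ring zify.
From mathcomp Require Import complex spectral sesquilinear.
Import Order.TTheory GRing.Theory Num.Theory Num.Def.
Local Open Scope ring_scope.
Local Open Scope sesquilinear_scope.
Set Implicit Arguments. Unset Strict Implicit.

Lemma dd_psd (C : numClosedFieldType) n (N : 'M[C]_n) (a : 'I_n -> C) :
  (forall i l, 0 <= N i l) -> (forall i l, N i l = N l i) ->
  \sum_i \sum_l N i l * (a i * (a l)^*) <= \sum_i (\sum_l N i l) * (a i * (a i)^*).
Proof.
move=> N0 Ns.
have H0 : 0 <= \sum_i \sum_l N i l * ((a i - a l) * (a i - a l)^*).
  by apply: sumr_ge0 => i _; apply: sumr_ge0 => l _; rewrite mulr_ge0 // mul_conjC_ge0.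
have E : \sum_i \sum_l N i l * ((a i - a l) * (a i - a l)^*) =
   (\sum_i \sum_l N i l * (a i * (a i)^*) + \sum_i \sum_l N i l * (a l * (a l)^*))
   - (\sum_i \sum_l N i l * (a i * (a l)^*) + \sum_i \sum_l N i l * (a l * (a i)^*)).
  rewrite -!big_split -sumrB; apply: eq_bigr => i _.
  rewrite -!big_split -sumrB /=; apply: eq_bigr => l _.
  rewrite rmorphB /=; ring.
have E2 : \sum_i \sum_l N i l * (a l * (a l)^*) = \sum_i \sum_l N i l * (a i * (a i)^*).
  by rewrite exchange_big /=; apply: eq_bigr => i _; apply: eq_bigr => l _; rewrite Ns.
have E3 : \sum_i \sum_l N i l * (a l * (a i)^*) = \sum_i \sum_l N i l * (a i * (a l)^*).
  by rewrite exchange_big /=; apply: eq_bigr => i _; apply: eq_bigr => l _; rewrite Ns.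
rewrite E E2 E3 subr_ge0 -!mulr2n ler_pMn2r // in H0.
apply: le_trans H0 _; rewrite le_eqVlt; apply/orP; left; apply/eqP.
by apply: eq_bigr => i _; rewrite mulr_suml.
Qed.

Lemma char_poly_similar (F : fieldType) n (P A : 'M[F]_n) :
  P \in unitmx -> char_poly (invmx P *m A *m P) = char_poly A.
Proof.
move=> Pu; rewrite /char_poly /char_poly_mx.
set Q := map_mx polyC P; set Qi := map_mx polyC (invmx P).
have QQ : Qi *m Q = 1%:M by rewrite -map_mxM mulVmx // map_mx1.
rewrite !map_mxM -/Q -/Qi.
transitivity (\det (Qi *m ('X%:M - (A ^ polyC)%sesqui) *m Q)).
  congr (\det _); rewrite mulmxBr mulmxBl; congr (_ - _).
  by rewrite scalar_mxC -mulmxA QQ mulmx1.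
by rewrite !det_mulmx mulrAC -det_mulmx QQ det1 mul1r.
Qed.

Lemma spec (R : realType) n (K : 'M[R]_n) (lam : seq R) : K^T = K ->
  char_poly K = \prod_(x <- lam) ('X - x%:P) ->
  exists (P : 'M[R[i]]_n) (D : 'rV[R[i]]_n),
    [/\ P *m P^t* = 1%:M, P^t* *m P = 1%:M,
        map_mx (real_complex R) K = P^t* *m diag_mx D *m P &
        perm_eq (map (real_complex R) lam) [seq D 0 j | j <- enum 'I_n]].
Proof.
move=> KT cK.
set Kc := map_mx (real_complex R) K.
have KcT : Kc^t* = Kc.
  apply/matrixP => i j; rewrite !mxE.
  have -> : K j i = K i j by rewrite -[in LHS]KT mxE.
  by apply: conj_Creal; apply/complex_realP; exists (K i j).
have Kn : Kc \is normalmx by rewrite qualifE KcT.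
have HK := orthomx_spectralP Kn.
have Pu := spectral_unitarymx Kc.
have Pinv := invmx_unitary Pu.
set P := spectralmx Kc in HK Pu Pinv *; set D := spectral_diag Kc in HK *.
exists P, D; split.
- by apply/eqP; exact: Pu.
- by rewrite -Pinv mulVmx // spectral_unit.
- by rewrite -Pinv {1}HK.
apply: prod_XsubC_eq.
rewrite big_map -(eq_bigr _ (fun x _ => map_polyXsubC (real_complex R) x)).
rewrite -rmorph_prod -cK /=.
rewrite (map_char_poly (real_complex R)) -/Kc HK char_poly_similar ?spectral_unit //.
rewrite char_poly_trig ?diag_mx_is_trig // big_map big_enum /=.
by apply: eq_bigr => i _; rewrite mxE eqxx.
Qed.

Lemma rank_rinv (F : fieldType) m n (M : 'M[F]_(m, n)) (N : 'M[F]_(n, m)) :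
  M *m N = 1%:M -> \rank M = m.
Proof.
move=> MN; apply/eqP; rewrite eqn_leq rank_leq_row /=.
by rewrite -{1}(mxrank1 F m) -MN mxrankM_maxl.
Qed.

Lemma rowsub_rank (C : numClosedFieldType) m n (f : 'I_m -> 'I_n) (P : 'M[C]_n) :
  injective f -> P *m P^t* = 1%:M -> \rank (rowsub f P) = m.
Proof.
move=> finj PP; apply: (@rank_rinv _ _ _ _ ((rowsub f P)^t*)).
rewrite rowsubE trmx_mul map_mxM mulmxA -(mulmxA _ P) PP mulmx1 -rowsubE.
apply/matrixP => i j; rewrite !mxE.
by rewrite /= (inj_eq finj) conjC_nat eq_sym.
Qed.

Lemma common_vec (F : fieldType) n m1 m2 (W : 'M[F]_(m1,n)) (V : 'M[F]_(m2,n)) :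
  (n < \rank W + \rank V)%N -> exists2 v : 'rV_n, v != 0 & (v <= W)%MS && (v <= V)%MS.
Proof.
move=> H.
have rk : (0 < \rank (W :&: V))%N.
  have := mxrank_sum_cap W V; have := rank_leq_col (W + V)%MS; lia.
have X0 : (W :&: V)%MS != 0 by rewrite -mxrank_eq0 -lt0n.
have [i Hi] : exists i, row i (W :&: V)%MS != 0.
  apply/existsP; apply: contraR X0; rewrite negb_exists => /forallP Hr.
  by apply/eqP/row_matrixP => i; rewrite row0; apply/eqP; move: (Hr i); rewrite negbK.
exists (row i (W :&: V)%MS) => //.
by rewrite !(submx_trans (row_sub _ _)) ?capmxSl ?capmxSr.
Qed.

Lemma count_enum_card n (p : pred 'I_n) : count p (enum 'I_n) = #|[set i | p i]|.
Proof. by rewrite -sum1_count big_enum_cond /= sum1dep_card. Qed.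

Theorem theorem2 (R : realType) (n : nat) (E : quiver n) (lam : seq R) :
  (0 < n)%N ->
  no_multiple_connections E ->
  sorted_eigenvalues (kirchhoff_mx R E) lam ->
  forall k : nat, (k < n)%N ->
    (nth 0%N (sorted_degrees E) k)%:R - (n - k.+1)%:R <= lam`_k.
Proof.
move=> n0 nomult [lam_sorted cK] k kn.
set K := kirchhoff_mx R E in cK.
have nconnC : forall i j, nconn E i j = nconn E j i.
  by move=> i j; rewrite /nconn; apply: eq_count => e; rewrite orbC.
have KT : K^T = K.
  apply/matrixP => i j; rewrite !mxE eq_sym nconnC.
  by case: eqP => // ->.
have [P [D [PP1 PP2 HK Hperm]]] := spec KT cK.
have szlam : size lam = n.
  by have := size_char_poly K; rewrite cK size_prod_XsubC; case.
set dk := nth 0%N (sorted_degrees E) k.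
set c : R := dk%:R - (n - k.+1)%:R.
rewrite leNgt; apply/negP => Hlt.
set f := real_complex R.
have cnt : (k.+1 <= count (fun x : R => (x < c)%R) lam)%N.
  have Hall : all (fun x : R => (x < c)%R) (take k.+1 lam).
    apply/(all_nthP (0:R)) => i; rewrite size_takel ?szlam // => ik.
    rewrite nth_take //; apply: le_lt_trans Hlt.
    by apply: le_sorted_leq_nth => //; rewrite inE szlam; lia.
  rewrite -(cat_take_drop k.+1 lam) count_cat.
  move: Hall; rewrite all_count => /eqP ->; rewrite size_takel ?szlam //.
  exact: leq_addr.
set J := [set j : 'I_n | D 0 j < f c].
have cJ : (k.+1 <= #|J|)%N.
  rewrite -count_enum_card; apply: leq_trans cnt _.
  rewrite -(count_map (D 0) (fun z => (z < f c)%R)) -(permP Hperm) count_map.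
  by rewrite leq_eqVlt; apply/orP; left; apply/eqP; apply: eq_count => x /=; rewrite ltcR.
have [S [cS HS]] : exists S : {set 'I_n},
    #|S| = (n - k)%N /\ forall i, i \in S -> (dk <= degree E i)%N.
  have : (n - k <= #|[set i | (dk <= degree E i)%N]|)%N.
    rewrite -count_enum_card.
    rewrite -(count_map (degree E) (fun x => dk <= x)%N).
    rewrite -(permP (permEl (perm_sort leq _))) -/(sorted_degrees E).
    set sd := sorted_degrees E.
    have szsd : size sd = n by rewrite size_sort size_map size_enum_ord.
    have srt : sorted leq sd by apply: sort_sorted; exact: leq_total.
    rewrite -(cat_take_drop k sd) count_cat.
    have : all (fun x => dk <= x)%N (drop k sd).
      apply/(all_nthP 0%N) => i; rewrite size_drop szsd => ik; rewrite nth_drop.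
      apply: (sorted_leq_nth leq_trans leqnn 0%N srt).
      - by rewrite inE szsd.
      - by rewrite inE szsd; lia.
      - exact: leq_addr.
    by rewrite all_count => /eqP ->; rewrite size_drop szsd leq_addl.
  case/card_geqP => s [us ss sub]; exists [set x in s]; split.
    by rewrite cardsE (card_uniqP us) ss.
  by move=> i; rewrite inE => /sub; rewrite inE.
pose fJ := fun t : 'I_#|J| => @enum_val _ (mem J) t.
pose fS := fun t : 'I_#|S| => @enum_val _ (mem S) t.
have fJinj : injective fJ by exact: enum_val_inj.
have fSinj : injective fS by exact: enum_val_inj.
have fJin : forall t, fJ t \in J by move=> t; exact: enum_valP.
have fSin : forall t, fS t \in S by move=> t; exact: enum_valP.
have rW : \rank (rowsub fJ P) = #|J| := rowsub_rank fJinj PP1.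
have rV : \rank (rowsub fS (1%:M : 'M[R[i]]_n)) = #|S|.
  by apply: rowsub_rank fSinj _; rewrite trmx1 map_mx1 mulmx1.
have [v v0 /andP[vW vV]] := common_vec (W := rowsub fJ P)
   (V := rowsub fS (1%:M : 'M[R[i]]_n)) (ltac:(rewrite rW rV cS; lia)).
move: vW => /submxP [b vb]; move: vV => /submxP [b' vb'].
set a := b *m rowsub fJ 1%:M.
have va : v = a *m P by rewrite vb /a -mulmxA -rowsubE.
have a0 : forall j, j \notin J -> a 0 j = 0.
  move=> j jJ; rewrite !mxE; apply: big1 => t _; rewrite !mxE.
  case: eqP => [e|]; last by rewrite mulr0.
  by move: (fJin t); rewrite e (negbTE jJ).
have vS : forall i, i \notin S -> v 0 i = 0.
  move=> i iS; rewrite vb' !mxE; apply: big1 => t _; rewrite !mxE.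
  case: eqP => [e|]; last by rewrite mulr0.
  by move: (fSin t); rewrite e (negbTE iS).
set Kc := map_mx f K.
set M' := Kc - (f c)%:M.
set q := (v *m M' *m v^t*) 0 0.
have fc : f c = dk%:R - (n - k.+1)%:R by rewrite /f /c rmorphB !rmorph_nat.
have qE : q = \sum_j (D 0 j - f c) * (a 0 j * (a 0 j)^*).
  rewrite /q.
  have -> : v *m M' *m v^t* = a *m (diag_mx D - (f c)%:M) *m a^t*.
    have HM : M' = P^t* *m (diag_mx D - (f c)%:M) *m P.
      rewrite /M' /Kc HK mulmxBr mulmxBl; congr (_ - _).
      by rewrite scalar_mxC -mulmxA PP2 mulmx1.
    rewrite HM va trmx_mul map_mxM !mulmxA -(mulmxA a P) PP1 mulmx1.
    by rewrite -(mulmxA _ P) PP1 mulmx1.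
  rewrite mulmxBr mul_mx_diag mul_mx_scalar !mxE; apply: eq_bigr => j _.
  by rewrite !mxE; ring.
have qneg : q < 0.
  have [j0 aj0] : exists j, a 0 j != 0.
    apply/existsP; apply: contraR v0; rewrite negb_exists => /forallP Ha.
    rewrite va; have -> : a = 0.
      by apply/rowP => j; rewrite [RHS]mxE; apply/eqP; move: (Ha j); rewrite negbK.
    by rewrite mul0mx.
  have j0J : j0 \in J.
    by case: (boolP (j0 \in J)) => // /a0 e; move: aj0; rewrite e eqxx.
  rewrite qE (bigD1 j0) //=.
  apply: (@le_lt_trans _ _ ((D 0 j0 - f c) * (a 0 j0 * (a 0 j0)^*) + 0)).
    rewrite lerD2l; apply: sumr_le0 => j _.
    case: (boolP (j \in J)) => [jJ|/a0 ->]; last by rewrite mul0r mulr0.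
    apply: mulr_le0_ge0; last exact: mul_conjC_ge0.
    by rewrite subr_le0; apply: ltW; move: jJ; rewrite inE.
  rewrite addr0 pmulr_llt0 ?mul_conjC_gt0 // subr_lt0.
  by move: j0J; rewrite inE.
pose N := \matrix_(i, l) (if (i \in S) && (l \in S) && (i != l)
                            then (nconn E i l)%:R else 0 : R[i]).
pose w i := v 0 i * (v 0 i)^*.
have Mentry : forall i l, v 0 i * M' i l * (v 0 l)^* =
    (if l == i then ((degree E i)%:R - f c) * w i else 0)
    - N i l * (v 0 i * (v 0 l)^*).
  move=> i l.
  case: (boolP (i \in S)) => iS; last first.
    rewrite /N /w !mxE (negbTE iS) (vS i iS) /= !(mul0r, mulr0, conjC0, subr0).
    by case: eqP.
  case: (boolP (l \in S)) => lS; last first.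
    rewrite /N /w !mxE (negbTE lS) andbF (vS l lS) /= !(mul0r, mulr0, conjC0, subr0).
    by case: eqP => // e; move: lS; rewrite e iS.
  rewrite /N /w /M' /Kc /K /kirchhoff_mx !mxE iS lS /=.
  case: (eqVneq l i) => [->|li]; rewrite ?eqxx /=.
    by rewrite subr0 mulr1n /f rmorph_nat -/f; ring.
  by rewrite sub0r mulr0n /f rmorphN rmorph_nat -/f; ring.
have qE2 : q = \sum_i ((degree E i)%:R - f c) * w i
               - \sum_i \sum_l N i l * (v 0 i * (v 0 l)^*).
  rewrite /q mxE.
  under eq_bigr do rewrite !mxE big_distrl /=.
  rewrite exchange_big /=.
  under eq_bigr do under eq_bigr do rewrite Mentry.
  rewrite -sumrB; apply: eq_bigr => i _; rewrite sumrB; congr (_ - _).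
  by rewrite -big_mkcond /= big_pred1_eq.
have qpos : 0 <= q.
  rewrite qE2 subr_ge0.
  apply: (le_trans (@dd_psd _ _ N (fun i => v 0 i) _ _)).
  - by move=> i l; rewrite mxE; case: ifP => // _; exact: ler0n.
  - by move=> i l; rewrite !mxE nconnC eq_sym [(i \in S) && _]andbC.
  apply: ler_sum => i _.
  case: (boolP (i \in S)) => iS; last by rewrite /w (vS i iS) !(mul0r, mulr0).
  apply: ler_wpM2r; first exact: mul_conjC_ge0.
  have sN : \sum_l N i l = (\sum_l (if (i \in S) && (l \in S) && (i != l)
                                     then nconn E i l else 0))%:R.
    by rewrite natr_sum; apply: eq_bigr => l _; rewrite mxE; case: ifP.
  rewrite sN; apply: (@le_trans _ _ (n - k.+1)%:R).
    rewrite ler_nat.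
    apply: (@leq_trans (\sum_l (if l \in S :\ i then 1 else 0))%N).
      apply: leq_sum => l _; rewrite in_setD1 iS /=.
      case: (boolP (l == i)) => [/eqP->|li]; first by rewrite eqxx andbF.
      rewrite eq_sym li /=; case: (l \in S) => //.
      by apply: nomult; rewrite eq_sym.
    rewrite -big_mkcond /= sum1_card.
    by have := cardsD1 i S; rewrite iS cS /= add1n subnS => ->.
  rewrite fc -subr_ge0.
  have -> : (degree E i)%:R - (dk%:R - (n - k.+1)%:R) - (n - k.+1)%:R
            = (degree E i)%:R - dk%:R :> R[i] by ring.
  by rewrite subr_ge0 ler_nat; exact: HS.
by have := lt_le_trans qneg qpos; rewrite ltxx.
Qed.
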